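(* Let $T$ be a tournament with $n$ vertices. Then in the dichromatic polynomial $P(T;x)$ the coefficient of $x^{n-1}$ is zero, and the coefficient of $x^{n-2}$ equals $-t$, where $t$ is the number of directed triangles of $T$.
   Context: A tournament is an orientation of a complete graph; a directed triangle is a directed cycle of length $3$. For a positive integer $k$, a proper $k$-coloring of a digraph $D$ is a map $c:V(D)\to\{1,\ldots,k\}$ such that each color class induces a subdigraph with no directed cycle. The number of proper $k$-colorings of $D$ is a polynomial in $k$, denoted $P(D;k)$ (the dichromatic polynomial). *)

(* Defs.v *)
From mathcomp Require Import all_boot all_order all_algebra.
Set Implicit Arguments. Unset Strict Implicit. Unset Printing Implicit Defensive.
Import GRing.Theory.
Local Open Scope ring_scope.

(* A digraph on a finite vertex type V is a relation E : rel V (E u v = arc u -> v). *)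

Definition is_tournament (V : finType) (E : rel V) : bool :=
  [forall u, ~~ E u u] && [forall u, forall v, (u != v) ==> (E u v != E v u)].

(* A directed cycle inside A: distinct vertices f 0, ..., f m (m+1 <= #|V|),
   all in A, with arcs f i -> f (i+1 mod m+1). *)
Definition has_dicycle (V : finType) (E : rel V) (A : {set V}) : bool :=
  [exists m : 'I_#|V|, exists f : {ffun 'I_m.+1 -> V},
     injectiveb f && [forall i, (f i \in A) && E (f i) (f (ordS i))]].

(* Proper k-colouring (colours 'I_k ~ {1..k}): every colour class induces
   an acyclic subdigraph. *)
Definition proper_coloring (V : finType) (E : rel V) (k : nat)
  (c : {ffun V -> 'I_k}) : bool :=
  [forall i : 'I_k, ~~ has_dicycle E [set v | c v == i]].

Definition num_colorings (V : finType) (E : rel V) (k : nat) : nat :=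
  #|[set c : {ffun V -> 'I_k} | proper_coloring E c]|.

Definition is_dichromatic_poly (V : finType) (E : rel V) (P : {poly rat}) : Prop :=
  forall k : nat, (0 < k)%N -> P.[k%:R] = (num_colorings E k)%:R.

(* Number of directed triangles (as 3-vertex subsets spanning a directed 3-cycle). *)
Definition num_dir_triangles (V : finType) (E : rel V) : nat :=
  #|[set S : {set V} | [exists a, exists b, exists c,
        (S == [set a; b; c]) && E a b && E b c && E c a]]|.

(* Main.v *)
Require Import Defs.
From mathcomp Require Import all_boot all_order all_algebra.
From mathcomp Require Import zify.
Import GRing.Theory.
Set Implicit Arguments. Unset Strict Implicit. Unset Printing Implicit Defensive.

Lemma tour_loop (V : finType) (E : rel V) : is_tournament E -> forall u, ~~ E u u.
Proof. by case/andP => /forallP H _. Qed.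

Lemma tour_asym (V : finType) (E : rel V) : is_tournament E -> forall u v, E u v -> ~~ E v u.
Proof.
move=> HT u v Huv; have [<-|neq] := eqVneq u v; first exact: tour_loop.
case/andP: HT => _ /forallP /(_ u) /forallP /(_ v); rewrite neq /= Huv.
by case: (E v u).
Qed.

Lemma tour_total (V : finType) (E : rel V) : is_tournament E -> forall u v, u != v -> E u v || E v u.
Proof.
move=> HT u v neq; case/andP: HT => _ /forallP /(_ u) /forallP /(_ v); rewrite neq /=.
by case: (E u v); case: (E v u).
Qed.

Lemma walk_tri (V : finType) (E : rel V) : is_tournament E ->
  forall L (g : nat -> V), 0 < L -> g L = g 0 -> (forall i, i < L -> E (g i) (g i.+1)) ->
  exists i j l, [/\ i <= L, j <= L, l <= L & [&& E (g i) (g j), E (g j) (g l) & E (g l) (g i)]].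
Proof.
move=> HT; elim/ltn_ind => L IH g L0 gL Hg.
case: L IH L0 gL Hg => [//|[|[|L]]] IH _ gL Hg.
- by have := Hg 0 isT; rewrite gL (negbTE (tour_loop HT _)).
- have H0 := Hg 0 isT; have := Hg 1 isT; rewrite gL.
  by rewrite (negbTE (tour_asym HT H0)).
have [e20|n20] := eqVneq (g 2) (g 0).
  have [||i [j [l [Hi Hj Hl Ht]]]] := IH L.+1 (leqW (leqnn _)) (fun i => g i.+2) isT.
  - by rewrite /= gL e20.
  - by move=> i Hi; apply: Hg.
  by exists i.+2, j.+2, l.+2; split.
have H01 := Hg 0 isT; have H12 := Hg 1 isT.
case/orP: (tour_total HT n20) => H.
  exists 0, 1, 2; split => //; by rewrite H01 H12 H.
pose g' i := if i is 0 then g 0 else g i.+1.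
have [||i [j [l [Hi Hj Hl Ht]]]] := IH L.+2 (leqnn _) g' isT.
- by rewrite /g' /= gL.
- by case=> [|i] Hi //; apply: Hg.
exists (if i is 0 then 0 else i.+1), (if j is 0 then 0 else j.+1), (if l is 0 then 0 else l.+1).
split.
- by case: i Hi {Ht}.
- by case: j Hj {Ht}.
- by case: l Hl {Ht}.
by move: Ht; rewrite /g'; case: i {Hi} => [|i]; case: j {Hj} => [|j]; case: l {Hl} => [|l].
Qed.

Lemma inord_over m : (inord m.+1 : 'I_m.+1) = ord0.
Proof. by apply: val_inj; rewrite /= /inord /insubd insubF //= ltnn. Qed.

Lemma dicycle_tri (V : finType) (E : rel V) : is_tournament E -> forall A : {set V},
  has_dicycle E A = [exists a, exists b, exists d,
     [&& a \in A, b \in A, d \in A, E a b, E b d & E d a]].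
Proof.
move=> HT A; apply/idP/idP.
  case/existsP => m /existsP [f /andP [_ /forallP Hf]].
  pose g i := f (inord i).
  have [||i [j [l [Hi Hj Hl Ht]]]] := walk_tri HT (g := g) (L := m.+1) isT.
  - by rewrite /g inord_over; congr (f _); apply: val_inj; rewrite /= inordK.
  - move=> i Hi; have /andP [_ H] := Hf (inord i).
    rewrite /g; suff -> : (inord i.+1 : 'I_m.+1) = ordS (inord i) by [].
    move: Hi; rewrite ltnS leq_eqVlt => /orP [/eqP ->|Hi].
      by rewrite inord_over; apply: val_inj => /=; rewrite inordK // modnn.
    by apply: val_inj => /=; rewrite !inordK // ?modn_small // ltnW.
  apply/existsP; exists (g i); apply/existsP; exists (g j); apply/existsP; exists (g l).
  have inA k : g k \in A by have /andP [] := Hf (inord k).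
  by rewrite !inA.
case/existsP => a /existsP [b /existsP [d /and5P [Ha Hb Hd Hab /andP [Hbd Hda]]]].
have nab : a != b by apply: contraTneq Hab => ->; apply: tour_loop.
have nbd : b != d by apply: contraTneq Hbd => ->; apply: tour_loop.
have nda : d != a by apply: contraTneq Hda => ->; apply: tour_loop.
pose f := [ffun i : 'I_3 => nth a [:: a; b; d] i].
have finj : injective f.
  move=> i j; rewrite !ffunE.
  by case: i => [[|[|[|?]]] ?]; case: j => [[|[|[|?]]] ?] //= => H;
    apply: val_inj => //=; move: H; rewrite ?eqxx //=;
    move=> H; move: nab nbd nda; rewrite H ?eqxx //= ?andbF.
have H3 : 2 < #|V| by have := leq_card f finj; rewrite card_ord.
apply/existsP; exists (Ordinal H3); apply/existsP; exists f.
have -> : injectiveb f by apply/injectiveP.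
apply/forallP => i; rewrite !ffunE.
by case: i => [[|[|[|?]]] ?] //=; rewrite ?Ha ?Hb ?Hd.
Qed.

Definition tri (V : finType) (E : rel V) : {set {set V}} :=
  [set S : {set V} | [exists a, exists b, exists c,
        (S == [set a; b; c]) && E a b && E b c && E c a]].

Definition mono (V : finType) k (c : {ffun V -> 'I_k}) (S : {set V}) :=
  [forall u in S, forall v in S, c u == c v].

Lemma mono3 (V : finType) k (c : {ffun V -> 'I_k}) a b d :
  mono c [set a; b; d] = (c a == c b) && (c b == c d).
Proof.
apply/idP/idP.
  move/forallP => H.
  have H1 := H a; have H2 := H b; rewrite !inE !eqxx /= ?orbT in H1 H2.
  move/forallP: H1 => /(_ b); rewrite !inE eqxx ?orbT /= => ->.
  by move/forallP: H2 => /(_ d); rewrite !inE eqxx ?orbT /=.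
case/andP => /eqP e1 /eqP e2; apply/forallP => u; apply/implyP => Hu.
apply/forallP => v; apply/implyP => Hv.
have Hx x : x \in [set a; b; d] -> c x = c a.
  by rewrite !inE => /orP [/orP [] | ] /eqP -> //; rewrite e1 e2.
by rewrite (Hx _ Hu) (Hx _ Hv).
Qed.

Lemma proper_iff (V : finType) (E : rel V) k (c : {ffun V -> 'I_k}) :
  is_tournament E -> proper_coloring E c = [forall S in tri E, ~~ mono c S].
Proof.
move=> HT; apply/idP/idP.
  move/forallP => Hp; apply/forallP => S; apply/implyP.
  rewrite inE => /existsP [a /existsP [b /existsP [d /andP [/andP [/andP [/eqP -> Hab] Hbd] Hda]]]].
  rewrite mono3; apply/negP => /andP [/eqP e1 /eqP e2].
  move: (Hp (c a)); rewrite dicycle_tri // => /negP; apply.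
  apply/existsP; exists a; apply/existsP; exists b; apply/existsP; exists d.
  by rewrite !inE e1 e2 !eqxx Hab Hbd Hda.
move/forallP => H; apply/forallP => i; rewrite dicycle_tri //.
apply/negP => /existsP [a /existsP [b /existsP [d /and5P [Ha Hb Hd Hab /andP [Hbd Hda]]]]].
move: (H [set a; b; d]); rewrite mono3 inE.
rewrite !inE in Ha Hb Hd.
rewrite (eqP Ha) (eqP Hb) (eqP Hd) !eqxx /= => /negP; apply.
apply/existsP; exists a; apply/existsP; exists b; apply/existsP; exists d.
by rewrite eqxx Hab Hbd Hda.
Qed.

Definition adj (V : finType) (J : {set {set V}}) : rel V :=
  fun u v => [exists S in J, (u \in S) && (v \in S)].

Definition rr (V : finType) (J : {set {set V}}) := #|[set x | roots (adj J) x]|.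

Lemma adj_sym (V : finType) (J : {set {set V}}) : symmetric (adj J).
Proof.
move=> u v; apply/existsP/existsP => [] [S /andP [HS /andP [H1 H2]]];
  by exists S; rewrite HS H1 H2.
Qed.

Lemma adj_csym (V : finType) (J : {set {set V}}) : connect_sym (adj J).
Proof. exact/sym_connect_sym/adj_sym. Qed.

Lemma conn_const (V : finType) (J : {set {set V}}) k (c : {ffun V -> 'I_k}) :
  [forall S in J, mono c S] -> forall x y, connect (adj J) x y -> c x = c y.
Proof.
move=> /forallP H x y /connectP [p Hp ->]; elim: p x Hp => [//|z p IH] x /= /andP [Hxz Hp].
rewrite -(IH z Hp); case/existsP: Hxz => S /andP [HS /andP [Hx Hz]].
have := H S; rewrite HS /= => /forallP /(_ x); rewrite Hx /= => /forallP /(_ z).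
by rewrite Hz => /eqP.
Qed.

Lemma cnt_roots (V : finType) (J : {set {set V}}) k :
  #|[set c : {ffun V -> 'I_k} | [forall S in J, mono c S]]| = k ^ rr J.
Proof.
set e := adj J.
have Hs := adj_csym J.
pose RT := {x : V | fingraph.root e x == x}.
have rP v : fingraph.root e (fingraph.root e v) == fingraph.root e v by rewrite root_root.
pose rt v : RT := exist _ (fingraph.root e v) (rP v).
pose F (d : {ffun RT -> 'I_k}) : {ffun V -> 'I_k} := [ffun v => d (rt v)].
have rtK (x : RT) : rt (val x) = x by apply: val_inj => /=; apply/eqP; exact: (valP x).
have Finj : injective F.
  move=> d1 d2 H; apply/ffunP => x; rewrite -(rtK x).
  by have := congr1 (fun f : {ffun V -> 'I_k} => f (val x)) H; rewrite !ffunE.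
have -> : [set c : {ffun V -> 'I_k} | [forall S in J, mono c S]] = F @: setT.
  apply/setP => c; rewrite inE; apply/idP/imsetP.
    move=> Hc; exists [ffun x : RT => c (val x)]; first by rewrite inE.
    apply/ffunP => v; rewrite !ffunE /=.
    by apply: conn_const Hc _ _ _; exact: connect_root.
  case=> d _ ->; apply/forallP => S; apply/implyP => HS.
  apply/forallP => u; apply/implyP => Hu; apply/forallP => v; apply/implyP => Hv.
  rewrite !ffunE; apply/eqP; congr (d _); apply: val_inj => /=.
  apply/eqP; rewrite /e (root_connect Hs); apply: connect1; apply/existsP; exists S.
  by rewrite HS Hu Hv.
rewrite card_imset // cardsT card_ffun card_ord; congr (_ ^ _).
by rewrite card_sig /rr cardsE.
Qed.

Lemma tri_card3 (V : finType) (E : rel V) T : is_tournament E -> T \in tri E -> #|T| = 3.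
Proof.
move=> HT; rewrite inE => /existsP [a /existsP [b /existsP [d /andP [/andP [/andP [/eqP -> Hab] Hbd] Hda]]]].
have nab : a != b by apply: contraTneq Hab => ->; apply: tour_loop.
have nbd : b != d by apply: contraTneq Hbd => ->; apply: tour_loop.
have nda : d != a by apply: contraTneq Hda => ->; apply: tour_loop.
rewrite -setUA cardsU1 cards2 nbd !inE negb_or nab eq_sym nda.
by [].
Qed.

Lemma same_root (V : finType) (J : {set {set V}}) T x y :
  T \in J -> x \in T -> y \in T -> fingraph.root (adj J) x = fingraph.root (adj J) y.
Proof.
move=> HT Hx Hy; apply/eqP; rewrite (root_connect (adj_csym J)); apply: connect1.
by apply/existsP; exists T; rewrite HT Hx Hy.
Qed.

Lemma isolated_root (V : finType) (J : {set {set V}}) x :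
  (forall S, S \in J -> x \notin S) -> fingraph.root (adj J) x = x.
Proof.
move=> H; have /connectP [[|z p] Hp Hl] := connect_root (adj J) x; first by [].
case/andP: Hp => /existsP [S /andP [HS /andP [Hx _]]].
by have := H S HS; rewrite Hx.
Qed.

Lemma rr0 (V : finType) : rr (set0 : {set {set V}}) = #|V|.
Proof.
rewrite /rr -[RHS]cardsT; apply: eq_card => x; rewrite !inE.
by rewrite /roots /= isolated_root ?eqxx // => S; rewrite inE.
Qed.

Lemma rr1 (V : finType) (E : rel V) T : is_tournament E -> T \in tri E ->
  rr [set T] = (#|V| - 2)%N.
Proof.
move=> HE HT; have H3 := tri_card3 HE HT.
have [a Ha] : exists a, a \in T by apply/set0Pn; rewrite -card_gt0 H3.
rewrite /rr; set e := adj [set T].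
have rT : fingraph.root e a \in T.
  have Hc : closed e (mem T).
    move=> x y /existsP [S /andP [HS /andP [Hx Hy]]]; rewrite inE in HS.
    rewrite (eqP HS) in Hx Hy; change ((x \in T) = (y \in T)); by rewrite Hx Hy.
  by rewrite -(closed_connect Hc (connect_root e a)).
have -> : [set x | roots e x] = fingraph.root e a |: ~: T.
  apply/setP => x; rewrite !inE /roots /=.
  case Hx : (x \in T) => /=.
    by rewrite orbF (same_root (J := [set T]) (set11 T) Hx Ha) eq_sym.
  rewrite isolated_root ?eqxx ?orbT // => S; rewrite inE => /eqP ->; by rewrite Hx.
rewrite cardsU1 inE rT /=.
by rewrite -(cardsC T) H3 -[3]/(2+1) -addnA addKn.
Qed.

Lemma rr2 (V : finType) (E : rel V) (J : {set {set V}}) T1 T2 :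
  is_tournament E -> J \subset tri E -> T1 \in J -> T2 \in J -> T1 != T2 ->
  (rr J <= #|V| - 3)%N.
Proof.
move=> HE HJ H1 H2 n12.
have H31 := tri_card3 HE (subsetP HJ _ H1).
have H32 := tri_card3 HE (subsetP HJ _ H2).
have [a1 Ha1] : exists a, a \in T1 by apply/set0Pn; rewrite -card_gt0 H31.
have [a2 Ha2] : exists a, a \in T2 by apply/set0Pn; rewrite -card_gt0 H32.
rewrite /rr; set e := adj J.
set r1 := fingraph.root e a1; set r2 := fingraph.root e a2.
have sub : [set x | roots e x] \subset ~: (T1 :|: T2) :|: [set r1; r2].
  apply/subsetP => x; rewrite !inE /roots /= => /eqP Hx.
  case Hx1 : (x \in T1); first by rewrite -Hx /r1 (same_root H1 Hx1 Ha1) eqxx !orbT.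
  case Hx2 : (x \in T2); first by rewrite -Hx /r2 (same_root H2 Hx2 Ha2) eqxx !orbT.
  by [].
have le1 := subset_leq_card sub.
have le2 := (leq_card_setU (~: (T1 :|: T2)) [set r1; r2]).1.
have eC := cardsC (T1 :|: T2).
have eU := cardsUI T1 T2.
have lI : (#|T1 :&: T2| <= 2)%N.
  rewrite leqNgt; apply/negP => HI.
  have s1 : T1 :&: T2 \subset T1 by apply: subsetIl.
  have s2 : T1 :&: T2 \subset T2 by apply: subsetIr.
  have e1 : T1 :&: T2 = T1 by apply/eqP; rewrite eqEcard s1 H31.
  have e2 : T1 :&: T2 = T2 by apply/eqP; rewrite eqEcard s2 H32.
  by move: n12; rewrite -e1 -{2}e2 eqxx.
have Hr : (#|T1 :&: T2| = 0)%N \/ r1 = r2.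
  have [/eqP|] := posnP #|T1 :&: T2|; first by left; apply/eqP.
  rewrite card_gt0 => /set0Pn [u]; rewrite inE => /andP [Hu1 Hu2]; right.
  by rewrite /r1 /r2 (same_root H1 Ha1 Hu1) (same_root H2 Ha2 Hu2).
rewrite cards2 in le2.
move: le1 le2 eC eU lI Hr; rewrite H31 H32.
set x := #|[set x | roots e x]|; set y := #|~: (T1 :|: T2)|; set z := #|T1 :|: T2|.
set w := #|T1 :&: T2|; set n := #|V|.
case: (r1 =P r2) => /= [_|ne]; first lia.
move=> ? ? ? ? ? [?|/ne //]; lia.
Qed.

Local Open Scope ring_scope.

Lemma count_formula (V : finType) (E : rel V) k : is_tournament E ->
  (num_colorings E k)%:R =
  \sum_(J : {set {set V}} | J \subset tri E) (-1) ^+ #|J| * (k ^ rr J)%:R :> rat.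
Proof.
move=> HT.
rewrite /num_colorings -sum1_card big_mkcond natr_sum /=.
transitivity (\sum_(c : {ffun V -> 'I_k}) \sum_(J : {set {set V}})
   (-1) ^+ #|J| * ((J \subset tri E) && [forall S in J, mono c S])%:R : rat).
  apply: eq_bigr => c _.
  transitivity (\prod_(S : {set V}) (- ((S \in tri E) && mono c S)%:R + 1) : rat).
    rewrite inE proper_iff //.
    case: forallP => [H|/forallP].
      rewrite big1 // => S _; have := H S; case: (S \in tri E) => //= /negbTE ->.
      by rewrite oppr0 add0r.
    rewrite negb_forall => /existsP [S]; rewrite negb_imply negbK => /andP [HS HM].
    by rewrite (bigD1 S) //= HS HM /= addNr mul0r.
  rewrite bigA_distr; apply: eq_bigr => J _.
  rewrite -big_mkcond /= prodrN; congr (_ * _).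
  case: (boolP [forall S in J, _]) => [/forallP H|].
    rewrite andbT; case: (boolP (J \subset tri E)) => [/subsetP Hs|].
      by rewrite big1 // => S HS; have := H S; rewrite HS Hs //= => ->.
    by case/subsetPn => S HS HnS; rewrite (bigD1 S) //= (negbTE HnS) /= mul0r.
  move=> /forallPn [S]; rewrite negb_imply => /andP [HS HM].
  by rewrite andbF (bigD1 S) //= (negbTE HM) andbF mul0r.
rewrite exchange_big /=; rewrite [RHS]big_mkcond; apply: eq_bigr => J _.
rewrite -big_distrr /= -natr_sum; case: (boolP (J \subset tri E)) => HJ /=; last first.
  by rewrite big1 ?mulr0.
rewrite -cnt_roots; congr (_ * _%:R).
by rewrite -sum1_card [RHS]big_mkcond /=; apply: eq_bigr => c _; rewrite inE; case: ifP.
Qed.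

Lemma poly_eq_nat (P Q : {poly rat}) :
  (forall k, (0 < k)%N -> P.[k%:R] = Q.[k%:R]) -> P = Q.
Proof.
move=> H; apply/eqP; rewrite -subr_eq0; apply/negPn/negP => nz.
pose rs := [seq (i.+1)%:R : rat | i <- iota 0 (size (P - Q))].
have := max_poly_roots nz (rs := rs).
rewrite size_map size_iota ltnn.
suff [h1 h2] : all (root (P - Q)) rs /\ uniq rs by move/(_ h1 h2).
split.
  apply/allP => x /mapP [i _ ->]; by rewrite /root hornerD hornerN H // subrr.
rewrite map_inj_uniq ?iota_uniq // => i j /eqP; by rewrite Num.Theory.eqr_nat => /eqP; case.
Qed.

Lemma classify (V : finType) (J : {set {set V}}) :
  [\/ J = set0, (exists T, J = [set T]) | exists T1 T2, [/\ T1 \in J, T2 \in J & T1 != T2]].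
Proof.
have [/eqP|] := posnP #|J|; first by rewrite cards_eq0 => /eqP ->; constructor 1.
case: (boolP (#|J| == 1%N)) => [/cards1P [T ->] _|n1 /card_gt0P [T1 HT1]].
  by constructor 2; exists T.
constructor 3.
have : (0 < #|J :\ T1|)%N.
  by move: n1; rewrite (cardsD1 T1) HT1 /=; case: #|_|.
case/card_gt0P => T2; rewrite !inE => /andP [n12 HT2].
by exists T1, T2; split => //; rewrite eq_sym.
Qed.

Definition Qpoly (V : finType) (E : rel V) : {poly rat} :=
  \sum_(J : {set {set V}} | J \subset tri E) ((-1) ^+ #|J|) *: 'X^(rr J).

Lemma Qpoly_eval (V : finType) (E : rel V) k : is_tournament E ->
  (Qpoly E).[k%:R] = (num_colorings E k)%:R.
Proof.
move=> HT; rewrite count_formula // /Qpoly horner_sum; apply: eq_bigr => J _.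
by rewrite hornerZ hornerXn natrX.
Qed.

Lemma Qpoly_coef (V : finType) (E : rel V) j :
  (Qpoly E)`_j = \sum_(J : {set {set V}} | J \subset tri E) (-1) ^+ #|J| * (j == rr J)%:R.
Proof. by rewrite /Qpoly coef_sum; apply: eq_bigr => J _; rewrite coefZ coefXn. Qed.

Lemma tri_n3 (V : finType) (E : rel V) T : is_tournament E -> T \in tri E -> (3 <= #|V|)%N.
Proof. by move=> HE HT; rewrite -(tri_card3 HE HT) max_card. Qed.

Unset Implicit Arguments.

Theorem mainTheorem8 (V : finType) (E : rel V) :
  is_tournament E ->
  (exists P : {poly rat}, is_dichromatic_poly E P) /\
  (forall P : {poly rat}, is_dichromatic_poly E P ->
     ((0 < #|V|)%N -> P`_(#|V|.-1) = 0) /\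
     ((1 < #|V|)%N -> P`_(#|V| - 2) = - (num_dir_triangles E)%:R)).
Proof.
move=> HE; split; first by exists (Qpoly E) => k _; apply: Qpoly_eval.
move=> P HP.
have -> : P = Qpoly E by apply: poly_eq_nat => k Hk; rewrite HP // Qpoly_eval.
split => Hn; rewrite Qpoly_coef.
  rewrite big1 // => J HJ.
  case: (classify J) HJ => [->|[T ->]|[T1 [T2 [H1 H2 n12]]]] HJ.
  - by rewrite rr0; case: #|V| Hn => // n _; rewrite /= (ltn_eqF (ltnSn n)) mulr0.
  - have HT : T \in tri E by apply: (subsetP HJ); rewrite set11.
    have := tri_n3 HE HT; rewrite (rr1 HE HT).
    case: #|V| => [//|[//|[//|n]]] _ /=.
    by rewrite -[(n.+3 - 2)%N]/n.+1 (gtn_eqF (ltnSn _)) mulr0.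
  - have := rr2 HE HJ H1 H2 n12; have := tri_n3 HE (subsetP HJ _ H1).
    move: (rr J) => r; case: #|V| Hn => // n _ H3 Hr.
    rewrite /= eq_sym ltn_eqF ?mulr0 //; lia.
transitivity (\sum_(J : {set {set V}} | J \subset tri E) - ((#|J| == 1)%N%:R : rat)).
  apply: eq_bigr => J HJ.
  case: (classify J) HJ => [->|[T ->]|[T1 [T2 [H1 H2 n12]]]] HJ.
  - rewrite rr0 cards0; case: #|V| Hn => [//|[//|n]] _ /=.
    by rewrite !subSS subn0 ltn_eqF ?mulr0 ?oppr0 // ltnW.
  - have HT : T \in tri E by apply: (subsetP HJ); rewrite set11.
    by rewrite (rr1 HE HT) cards1 eqxx expr1 mulN1r.
  - have := rr2 HE HJ H1 H2 n12; have := tri_n3 HE (subsetP HJ _ H1).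
    have c2 : (1 < #|J|)%N.
      rewrite (cardsD1 T1) H1 ltnS card_gt0; apply/set0Pn; exists T2.
      by rewrite !inE eq_sym n12.
    rewrite (gtn_eqF c2).
    move: (rr J) => r H3 Hr; have Hlt : (r < #|V| - 2)%N by lia.
    by rewrite (gtn_eqF Hlt) mulr0 oppr0.
rewrite sumrN; congr (- _).
rewrite -natr_sum; congr (_%:R).
rewrite (eq_bigr (fun J : {set {set V}} => if #|J| == 1%N then 1%N else 0%N)); last by move=> J _; case: eqP.
rewrite -big_mkcondr /= sum1dep_card /num_dir_triangles -/(tri E).
rewrite -(card_imset (mem (tri E)) (@set1_inj _)); apply: eq_card => J.
rewrite !inE; apply/andP/imsetP.
  case=> HJ /cards1P [T HT]; exists T => //; apply: (subsetP HJ); by rewrite HT set11.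
by case=> T HT ->; rewrite cards1 eqxx sub1set HT.
Qed.
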